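(* Let $C$ be a nonempty closed convex subset of a real Hilbert space $H$, and let $A,F:H\to H$ be Lipschitz continuous with constants $L_A,L_F$, respectively. Assume that $A$ is $\lambda$-strongly monotone for some $\lambda>0$ and that the couple $(A,F)$ is $\gamma$-strongly monotone on $H$ for some $\gamma>0$. Then $\mathrm{GVI}(A,F,C)$ admits a unique solution in $H$.
   Context: $\mathrm{GVI}(A,F,C)$: find $x^*\in H$ with $Fx^*\in C$ and $\langle Ax^*,y-Fx^*\rangle\ge0$ for all $y\in C$. $A$ is $\lambda$-strongly monotone if $\langle Ax-Ay,x-y\rangle\ge\lambda\|x-y\|^2$ for all $x,y$. The couple $(A,F)$ is $\gamma$-strongly monotone if $\langle Ax-Ay,Fx-Fy\rangle\ge\gamma\|x-y\|^2$ for all $x,y\in H$. *)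

(* Defs.v *)
From HB Require Import structures.
From mathcomp Require Import all_boot all_order all_algebra.
From mathcomp Require Import all_classical all_reals all_analysis.
Set Implicit Arguments. Unset Strict Implicit. Unset Printing Implicit Defensive.
Import Order.TTheory GRing.Theory Num.Theory.
Import numFieldNormedType.Exports.
Local Open Scope classical_set_scope.
Local Open Scope ring_scope.

(* [ip] is a real inner product on the normed space H inducing its norm:
   symmetric, linear in the first argument, and <x,x> = ||x||^2.
   Together with completeness of H (completeNormedModType) this makes
   (H, ip) a real Hilbert space. *)
Definition is_inner_product (R : realType) (H : normedModType R)
  (ip : H -> H -> R) : Prop :=
  [/\ (forall x y, ip x y = ip y x),
      (forall (a : R) (x y z : H), ip (a *: x + y) z = a * ip x z + ip y z)
    & (forall x, ip x x = `|x| ^+ 2)].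

Definition lipschitz_with (R : realType) (H : normedModType R)
  (L : R) (A : H -> H) : Prop :=
  forall x y, `|A x - A y| <= L * `|x - y|.

Definition strongly_monotone (R : realType) (H : normedModType R)
  (ip : H -> H -> R) (lam : R) (A : H -> H) : Prop :=
  forall x y, ip (A x - A y) (x - y) >= lam * `|x - y| ^+ 2.

Definition couple_strongly_monotone (R : realType) (H : normedModType R)
  (ip : H -> H -> R) (gam : R) (A F : H -> H) : Prop :=
  forall x y, ip (A x - A y) (F x - F y) >= gam * `|x - y| ^+ 2.

Definition GVI_sol (R : realType) (H : normedModType R)
  (ip : H -> H -> R) (A F : H -> H) (C : set H) (x : H) : Prop :=
  C (F x) /\ forall y, C y -> 0 <= ip (A x) (y - F x).

(* Main.v *)
Require Import Defs.
From HB Require Import structures.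
From mathcomp Require Import all_boot all_order all_algebra.
From mathcomp Require Import all_classical all_reals all_analysis.
From mathcomp Require Import ring lra.
Import Order.TTheory GRing.Theory Num.Theory.
Import numFieldNormedType.Exports.
Local Open Scope classical_set_scope.
Local Open Scope ring_scope.
Lemma banach_wrap (R : realType) (X : completeNormedModType R) (f : X -> X) (q : R) :
  0 <= q -> q < 1 -> (forall x y, `|f x - f y| <= q * `|x - y|) ->
  exists x, f x = x.
Proof.
move=> q0 q1 Hf.
have := @banach_fixed_point R X setT (totalfun f).
case.
- exists (NngNum q0); split => //= -[x y] _ /=. exact: Hf.
- exact: closedT.
- by exists point.
by move=> p _ /esym; exists p.
Qed.
Lemma convex_mem (R : realType) (H : normedModType R) (C : set H) (x y : H) (t : R) :
  convex_set C -> C x -> C y -> 0 <= t -> t <= 1 -> C (t *: x + (1 - t) *: y).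
Proof.
move=> cC Cx Cy t0 t1.
have := cC x y (Itv01 t0 t1); rewrite !inE => /(_ Cx Cy).
by [].
Qed.

Section IP.
Context {R : realType} {H : normedModType R} {ip : H -> H -> R}.
Hypothesis hip : is_inner_product ip.
Implicit Types (x y z : H) (a : R).

Lemma ipC x y : ip x y = ip y x. Proof. by case: hip. Qed.
Lemma ipn x : ip x x = `|x| ^+ 2. Proof. by case: hip. Qed.
Lemma ipL a x y z : ip (a *: x + y) z = a * ip x z + ip y z. Proof. by case: hip. Qed.
Lemma ip0l z : ip 0 z = 0.
Proof. have := ipL 1 0 0 z; rewrite scaler0 addr0 mul1r => h; lra. Qed.
Lemma ipDl x y z : ip (x + y) z = ip x z + ip y z.
Proof. by rewrite -[x]scale1r ipL mul1r scale1r. Qed.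
Lemma ipZl a x z : ip (a *: x) z = a * ip x z.
Proof. by rewrite -[a *: x]addr0 ipL ip0l addr0. Qed.
Lemma ipNl x z : ip (- x) z = - ip x z.
Proof. by rewrite -scaleN1r ipZl mulN1r. Qed.
Lemma ipBl x y z : ip (x - y) z = ip x z - ip y z.
Proof. by rewrite ipDl ipNl. Qed.
Lemma ipDr x y z : ip z (x + y) = ip z x + ip z y.
Proof. by rewrite ipC ipDl ipC [ip y z]ipC. Qed.
Lemma ipZr a x z : ip z (a *: x) = a * ip z x.
Proof. by rewrite ipC ipZl ipC. Qed.
Lemma ipNr x z : ip z (- x) = - ip z x.
Proof. by rewrite ipC ipNl ipC. Qed.
Lemma ipBr x y z : ip z (x - y) = ip z x - ip z y.
Proof. by rewrite ipDr ipNr. Qed.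
Lemma ip0r z : ip z 0 = 0.
Proof. by rewrite ipC ip0l. Qed.

Lemma nD2 x y : `|x + y| ^+ 2 = `|x| ^+ 2 + 2 * ip x y + `|y| ^+ 2.
Proof. rewrite -!ipn ipDl !ipDr [ip y x]ipC; ring. Qed.
Lemma nB2 x y : `|x - y| ^+ 2 = `|x| ^+ 2 - 2 * ip x y + `|y| ^+ 2.
Proof. rewrite -!ipn ipBl !ipBr [ip y x]ipC; ring. Qed.
Lemma nZ2 a x : `|a *: x| ^+ 2 = a ^+ 2 * `|x| ^+ 2.
Proof. by rewrite normrZ exprMn real_normK ?num_real. Qed.

Lemma ip_le x y : 2 * ip x y <= `|x| ^+ 2 + `|y| ^+ 2.
Proof. have := nB2 x y; have := sqr_ge0 `|x - y|. lra. Qed.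

Lemma nDle x y : `|x + y| ^+ 2 <= 2 * `|x| ^+ 2 + 2 * `|y| ^+ 2.
Proof. have := ip_le x y; rewrite nD2. lra. Qed.

Lemma lip2 (L : R) (f : H -> H) : lipschitz_with L f ->
  forall x y, `|f x - f y| ^+ 2 <= L ^+ 2 * `|x - y| ^+ 2.
Proof.
move=> hL x y; rewrite -exprMn; apply: lerXn2r => //; rewrite ?nnegrE //.
  exact: le_trans (hL x y).
Qed.

End IP.
Arguments lip2 {R H L f}.
Lemma lmod_e1 (R : realType) (H : normedModType R) (u l y : H) (t : R) :
  u - (t *: y + (1 - t) *: l) = (u - l) - t *: (y - l).
Proof.
rewrite scalerBl scale1r scalerBr opprB !opprD !addrA opprK.
by rewrite [u - _ - l]addrAC addrAC.
Qed.
Lemma lmod_e2 (R : realType) (H : normedModType R) (u a b : H) :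
  u - (2^-1 *: a + (1 - 2^-1) *: b) = 2^-1 *: ((u - a) + (u - b)).
Proof.
have h : (1 - 2^-1 : R) = 2^-1 by field.
rewrite h scalerDr !scalerBr.
have {1}-> : u = 2^-1 *: u + 2^-1 *: u.
  by rewrite -scalerDl (_ : 2^-1 + 2^-1 = 1 :> R) ?scale1r //; field.
rewrite opprD !addrA; congr (_ + _).
by rewrite addrAC.
Qed.

Lemma proj_ex (R : realType) (H : completeNormedModType R) (ip : H -> H -> R)
  (C : set H) :
  is_inner_product ip -> C !=set0 -> closed C -> convex_set C ->
  forall u, exists c, C c /\ forall y, C y -> ip (u - c) (y - c) <= 0.
Proof.
move=> hip [c0 Cc0] clC cvC u.
pose D := [set `|u - c| ^+ 2 | c in C].
have hD : has_inf D.
  split; first by exists (`|u - c0| ^+ 2), c0.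
  by exists 0 => _ [c _ <-]; exact: sqr_ge0.
pose d := inf D.
have dlb : forall c, C c -> d <= `|u - c| ^+ 2.
  by move=> c Cc; apply: (ge_inf hD.2); exists c.
have ex_c : forall n : nat, exists c, C c /\ `|u - c| ^+ 2 < d + n.+1%:R^-1.
  move=> n; have [|_ [c Cc <-] h] := @inf_adherent R D (n.+1%:R^-1) _ hD; first by rewrite invr_gt0.
  by exists c.
have [c hc] := choice ex_c.
have para : forall a b, C a -> C b -> `|a - b| ^+ 2 <= 2 * `|u - a| ^+ 2 + 2 * `|u - b| ^+ 2 - 4 * d.
  move=> a b Ca Cb.
  have Cm : C (2^-1 *: a + (1 - 2^-1) *: b).
    by apply: convex_mem => //; lra.
  have := dlb _ Cm; rewrite lmod_e2 nZ2.
  have -> : a - b = (u - b) - (u - a).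
    by rewrite opprB [RHS]addrC addrA subrK.
  rewrite (nD2 hip) (nB2 hip (u - b) (u - a)) (ipC hip (u - b)).
  move=> h; have : (2^-1 : R) ^+ 2 = 4^-1 by field.
  move=> e; rewrite e in h.
  have : 4 * d <= `|u - a| ^+ 2 + 2 * ip (u - a) (u - b) + `|u - b| ^+ 2.
    have h4 : (4 : R) * 4^-1 = 1 by field.
    have := ler_wpM2l (_ : (0:R) <= 4) h; rewrite mulrA h4 mul1r; apply; lra.
  lra.
have cvc : cvgn c.
  apply/cauchy_cvgP; apply/cauchy_ballP => e e0.
  have e4 : 0 < e ^+ 2 / 4 by apply: divr_gt0 => //; exact: exprn_gt0.
  have [N _ hN] := near_infty_natSinv_lt (PosNum e4).
  near_simpl.
  exists ([set n | (N <= n)%N], [set n | (N <= n)%N]); first by split; exists N.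
  move=> [n m] [/= Nn Nm]; rewrite -ball_normE /=.
  have := para _ _ (hc n).1 (hc m).1.
  have := (hc n).2; have := (hc m).2; have := hN _ Nn; have := hN _ Nm => /=.
  move: (n.+1%:R^-1 : R) (m.+1%:R^-1 : R) => x y h1 h2 h3 h4 h5.
  have : `|c n - c m| ^+ 2 < e ^+ 2 by lra.
  have := normr_ge0 (c n - c m); nra.
set l := limn c.
have Cl : C l.
  apply: (closed_cvg C clC _ l cvc).
  by apply: nearW => n; exact: (hc n).1.
have flim : (fun n => `|u - c n| ^+ 2) @ \oo --> `|u - l| ^+ 2.
  have h0 : (fun n => `|u - c n|) @ \oo --> `|u - l|.
    by apply: cvg_norm; apply: cvgB => //; exact: cvg_cst.
  rewrite expr2 (_ : (fun n => `|u - c n| ^+ 2) = (fun n => `|u - c n| * `|u - c n|)).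
    exact: (cvgM h0 h0).
  by apply/funext => n; rewrite expr2.
have hl : `|u - l| ^+ 2 <= d.
  apply/ler_addgt0Pr => e e0.
  apply: (cvgr_to_le flim).
  have [N _ hN] := near_infty_natSinv_lt (PosNum e0).
  exists N => // n /= Nn.
  have := (hc n).2; have := hN _ Nn => /=.
  move: (n.+1%:R^-1 : R) => x; lra.
exists l; split => // y Cy.
rewrite -[ip _ _]addr0; apply/ler_addgt0Pr => e e0.
pose K := `|y - l| ^+ 2.
have K0 : 0 <= K by exact: sqr_ge0.
pose t := e / (K + e).
have Ke : 0 < K + e by lra.
have t0 : 0 < t by exact: divr_gt0.
have t1 : t <= 1 by rewrite /t ler_pdivrMr // mul1r; lra.
have tK : t * K <= e.
  by rewrite /t mulrAC ler_pdivrMr //; nra.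
have Cz : C (t *: y + (1 - t) *: l) by apply: convex_mem => //; lra.
have := dlb _ Cz; rewrite lmod_e1 (nB2 hip) nZ2 (ipZr hip) -/K.
move=> h.
have : t * (2 * ip (u - l) (y - l)) <= t * (t * K) by nra.
rewrite ler_pM2l // => h2.
lra.
Qed.
Lemma lmod_e3 (R : realType) (H : normedModType R) (x y v w : H) (r : R) :
  (x - r *: v) - (y - r *: w) = (x - y) - r *: (v - w).
Proof.
rewrite scalerBr opprB opprD !addrA opprK.
by rewrite [LHS]addrAC [x - _ - y]addrAC.
Qed.

Lemma sm_surj (R : realType) (H : completeNormedModType R) (ip : H -> H -> R)
  (M : H -> H) (mu K : R) : is_inner_product ip -> 0 < mu ->
  (forall x y, mu * `|x - y| ^+ 2 <= ip (M x - M y) (x - y)) ->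
  (forall x y, `|M x - M y| ^+ 2 <= K * `|x - y| ^+ 2) ->
  forall b, exists x, M x = b.
Proof.
move=> hip mu0 hm hK b.
pose K' := `|K| + mu ^+ 2.
have KK : K <= K' by have := ler_norm K; have := sqr_ge0 mu; rewrite /K'; lra.
have mK : mu ^+ 2 <= K' by have := normr_ge0 K; rewrite /K'; lra.
have K0 : 0 < K' by have := exprn_gt0 2 mu0; lra.
pose r := mu / K'.
have r0 : 0 < r by exact: divr_gt0.
have rK : r * K' = mu by rewrite /r mulrVK // unitfE gt_eqF.
have rm1 : r * mu <= 1.
  by rewrite /r mulrAC ler_pdivrMr // mul1r -expr2.
have rm0 : 0 < r * mu by exact: mulr_gt0.
pose q := Num.sqrt (1 - r * mu).
have q0 : 0 <= q by exact: sqrtr_ge0.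
have q1 : q < 1.
  rewrite /q -[X in _ < X]sqrtr1 ltr_sqrt //; lra.
have hT : forall x y, `|(x - r *: (M x - b)) - (y - r *: (M y - b))| <= q * `|x - y|.
move=> x y.
rewrite lmod_e3.
have -> : M x - b - (M y - b) = M x - M y by rewrite opprB addrA subrK.
rewrite -ler_sqr ?nnegrE ?mulr_ge0 // exprMn sqr_sqrtr; last lra.
rewrite (nB2 hip) nZ2 (ipZr hip) (ipC hip (x - y)).
have := hm x y; have := hK x y; have := sqr_ge0 `|x - y|.
move: (`|x - y| ^+ 2) (ip (M x - M y) (x - y)) (`|M x - M y| ^+ 2) => A P Q A0 hQ hP.
have e1 : r * (mu * A) <= r * P by rewrite ler_pM2l.
have e2 : r ^+ 2 * Q <= r ^+ 2 * (K' * A).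
  rewrite ler_pM2l ?exprn_gt0 //; apply: le_trans hQ _; nra.
have e3 : r ^+ 2 * (K' * A) = r * mu * A by rewrite expr2 -mulrA (mulrA r K') rK; ring.
nra.
have [x hx] := @banach_wrap R H (fun x => x - r *: (M x - b)) q q0 q1 hT.
exists x.
move/eqP: hx; rewrite -subr_eq0 addrAC subrr add0r oppr_eq0 scaler_eq0.
by rewrite gt_eqF //= subr_eq0 => /eqP.
Qed.
Lemma lmod_e4 (V : zmodType) (a b c d : V) : (a - b) - (c - d) = (a - c) - (b - d).
Proof. by rewrite !opprB !addrA [LHS]addrAC [a - b - c]addrAC [RHS]addrAC. Qed.
Theorem theorem2p2 (R : realType) (H : completeNormedModType R)
  (ip : H -> H -> R) (C : set H) (A F : H -> H) (LA LF lam gam : R) :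
  is_inner_product ip ->
  C !=set0 -> closed C -> convex_set C ->
  lipschitz_with LA A -> lipschitz_with LF F ->
  0 < lam -> strongly_monotone ip lam A ->
  0 < gam -> couple_strongly_monotone ip gam A F ->
  exists! x : H, GVI_sol ip A F C x.
Proof.
move=> hip hC clC cvC hLA hLF lam0 smA gam0 csm.
have [P hP] := choice (@proj_ex _ _ _ _ hip hC clC cvC).
have firm : forall u v, `|P u - P v| ^+ 2 <= ip (u - v) (P u - P v).
  move=> u v.
  have h1 := (hP u).2 _ (hP v).1.
  have h2 := (hP v).2 _ (hP u).1.
  rewrite -[P v - P u]opprB (ipNr hip) in h1.
  rewrite -(ipn hip) !(ipBl hip) in h1 h2 *.
  lra.
have nexp : forall u v, `|P u - P v| ^+ 2 <= `|u - v| ^+ 2.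
  move=> u v; have := firm u v; have := ip_le hip (u - v) (P u - P v); lra.
have uniq : forall x1 x2, GVI_sol ip A F C x1 -> GVI_sol ip A F C x2 -> x1 = x2.
  move=> x1 x2 [C1 h1] [C2 h2].
  have e1 := h1 _ C2; have e2 := h2 _ C1.
  have e3 := csm x1 x2.
  rewrite (ipBl hip) -[F x2 - F x1]opprB (ipNr hip) in e1 e3 *.
  have : gam * `|x1 - x2| ^+ 2 <= 0 by lra.
  rewrite pmulr_rle0 // => hn.
  apply/eqP; rewrite -subr_eq0 -normr_eq0 -sqrf_eq0 eq_le hn sqr_ge0 //.
have [Ai hAi] := choice (@sm_surj _ _ ip A lam (LA ^+ 2) hip lam0 smA (lip2 hLA)).
pose rho := LF ^+ 2 / gam + 1.
have rho0 : 0 < rho by rewrite /rho; have := divr_ge0 (sqr_ge0 LF) (ltW gam0); lra.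
pose G := fun x => F x - P (F x - rho *: A x).
pose Gt := fun w => G (Ai w).
have lamS : forall x y, lam ^+ 2 * `|x - y| ^+ 2 <= `|A x - A y| ^+ 2.
  move=> x y; have := smA x y; have := ip_le hip (A x - A y) (lam *: (x - y)).
  rewrite (ipZr hip) nZ2; nra.
have Gdiff : forall x y, G x - G y = (F x - F y) - (P (F x - rho *: A x) - P (F y - rho *: A y)).
  by move=> x y; rewrite /G lmod_e4.
have udiff : forall x y, (F x - rho *: A x) - (F y - rho *: A y) = (F x - F y) - rho *: (A x - A y).
  by move=> x y; rewrite lmod_e3.
have [w hw] : exists w, Gt w = 0.
  pose mu := gam / (rho * (LA ^+ 2 + 1)).
  pose K := 6 * LF ^+ 2 / lam ^+ 2 + 4 * rho ^+ 2.
  apply: (@sm_surj _ _ ip Gt mu K hip).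
  - by apply: divr_gt0 => //; apply: mulr_gt0 => //; have := sqr_ge0 LA; lra.
  - move=> w1 w2; rewrite /Gt.
    set x := Ai w1; set y := Ai w2.
    rewrite Gdiff.
    set f := F x - F y; set a := A x - A y.
    set p := P (F x - rho *: A x) - P (F y - rho *: A y).
    have -> : w1 - w2 = a by rewrite /a /x /y !hAi.
    have hf := firm (F x - rho *: A x) (F y - rho *: A y).
    rewrite udiff -/f -/a -/p (ipBl hip) (ipZl hip) in hf.
    have hfp := ip_le hip f p.
    have hc := csm x y; rewrite -/f -/a (ipC hip a) in hc.
    have hLF2 := lip2 hLF x y; rewrite -/f in hLF2.
    have hLA2 := lip2 hLA x y; rewrite -/a in hLA2.
    rewrite (ipBl hip) (ipC hip p a).
    move: (`|x - y| ^+ 2) (sqr_ge0 `|x - y|) hc hLF2 hLA2 => S S0 hc hLF2 hLA2.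
    have hI : gam * S <= rho * (ip f a - ip a p).
      have e1 : rho * ip f a >= rho * (gam * S) by rewrite ler_pM2l.
      have e2 : LF ^+ 2 * S <= rho * (gam * S) - gam * S.
        rewrite /rho mulrDl mul1r addrK mulrA mulrVK //; last by rewrite unitfE gt_eqF.
      have := sqr_ge0 `|f|; have := sqr_ge0 `|p|.
      nra.
    have hmu : mu * (rho * (LA ^+ 2 + 1)) = gam.
      rewrite /mu mulrVK // unitfE gt_eqF //; apply: mulr_gt0 => //.
      have := sqr_ge0 LA; lra.
    have hLA0 := sqr_ge0 LA.
    have mu0 : 0 <= mu.
      apply: divr_ge0; first exact: ltW.
      by apply: mulr_ge0; [exact: ltW | lra].
    have : rho * (mu * `|a| ^+ 2) <= rho * (ip f a - ip a p).
      apply: le_trans hI.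
      have : mu * `|a| ^+ 2 <= mu * ((LA ^+ 2 + 1) * S).
        by apply: ler_wpM2l => //; nra.
      rewrite -(ler_pM2l rho0) => h; apply: le_trans h _.
      have -> : rho * (mu * ((LA ^+ 2 + 1) * S)) = (mu * (rho * (LA ^+ 2 + 1))) * S by ring.
      by rewrite hmu.
    by rewrite ler_pM2l.
  - move=> w1 w2; rewrite /Gt.
    set x := Ai w1; set y := Ai w2.
    rewrite Gdiff.
    set f := F x - F y; set a := A x - A y.
    set p := P (F x - rho *: A x) - P (F y - rho *: A y).
    have -> : w1 - w2 = a by rewrite /a /x /y !hAi.
    have hn := nexp (F x - rho *: A x) (F y - rho *: A y).
    rewrite udiff -/f -/a -/p in hn.
    have h1 := nDle hip f (- p); rewrite normrN in h1.
    have h2 := nDle hip f (- (rho *: a)); rewrite normrN nZ2 in h2.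
    have hLF2 := lip2 hLF x y; rewrite -/f in hLF2.
    have hl := lamS x y; rewrite -/a in hl.
    have hK : LF ^+ 2 * `|x - y| ^+ 2 <= LF ^+ 2 / lam ^+ 2 * `|a| ^+ 2.
      have hS : `|x - y| ^+ 2 <= `|a| ^+ 2 / lam ^+ 2.
        by rewrite ler_pdivlMr ?exprn_gt0 // mulrC.
      have -> : LF ^+ 2 / lam ^+ 2 * `|a| ^+ 2 = LF ^+ 2 * (`|a| ^+ 2 / lam ^+ 2) by ring.
      by apply: ler_wpM2l => //; exact: sqr_ge0.
    have -> : K * `|a| ^+ 2 = 6 * (LF ^+ 2 / lam ^+ 2 * `|a| ^+ 2) + 4 * (rho ^+ 2 * `|a| ^+ 2) by rewrite /K; ring.
    move: hK h1 h2 hn hLF2; move: (LF ^+ 2 / lam ^+ 2 * `|a| ^+ 2) (rho ^+ 2 * `|a| ^+ 2) => Z Y.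
    lra.
have sol : GVI_sol ip A F C (Ai w).
  rewrite /Gt /G in hw; move/eqP: hw; rewrite subr_eq0 => /eqP hx.
  set x := Ai w in hx *.
  split; first by rewrite hx; exact: (hP _).1.
  move=> y Cy; have := (hP (F x - rho *: A x)).2 _ Cy.
  rewrite -hx addrAC subrr add0r (ipNl hip) (ipZl hip) oppr_le0 pmulr_rge0 //.
by exists (Ai w); split => // x' hx'; exact: uniq sol hx'.
Qed.
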